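(* Let $F=\breve F(\alpha_1,\dots,\alpha_t)$ be a fence, let $i\in[t]$ with $\alpha_i\ge 2$, let $x\in\breve S_i$, let $v$ be the valley of $S_i$ (if it exists) and $p$ the peak of $S_i$ (if it exists), and put $y=s_{(i,1)}$, $z=s_{(i,\beta_i)}$. Then, as functions on $\mathcal J(F)$, \[ \alpha_i\chi_x+\chi_v+\chi_p=1-T_v-\sum_{y\trianglelefteq u\trianglelefteq x}\#[y,u]\,T_u+\sum_{x\vartriangleleft u\trianglelefteq z}\#[u,z]\,T_u , \] where $[a,b]=\{w\in F: a\trianglelefteq w\trianglelefteq b\}$ is an interval of $F$.
   Context: Fences: let $\alpha=(\alpha_1,\dots,\alpha_t)$ be positive integers with $t\ge2$ and $\alpha_1,\alpha_t\ge2$. Put $a_0=0$, $a_i=\alpha_1+\dots+\alpha_i$, $n=a_t-1$. The fence $\breve F(\alpha)$ is the poset (order $\trianglelefteq$) on $\{x_1,\dots,x_n\}$ whose cover relations are: for $1\le j\le n-1$ with $a_{i-1}\le j<a_i$, $x_j\lessdot x_{j+1}$ if $i$ is odd and $x_j\gtrdot x_{j+1}$ if $i$ is even. Segments: $S_1=\{x_j:1\le j\le a_1\}$, $S_i=\{x_j:a_{i-1}\le j\le a_i\}$ for $2\le i\le t-1$, $S_t=\{x_j:a_{t-1}\le j\le n\}$ (each a chain). The shared elements are $s_i=x_{a_i}$, $i\in[t-1]$; $s_i$ is a peak (covers two elements) for $i$ odd and a valley (is covered by two elements) for $i$ even. The peak (valley) of $S_i$ is the shared element of $S_i$ that is a peak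 (valley), if any. $\breve S_i$ is the set of unshared elements of $S_i$; $\beta_i=\#\breve S_i=\alpha_i-1$; $s_{(i,j)}$ is the $j$-th smallest element of $\breve S_i$ in the order of $F$. $\mathcal J(F)$ is the set of order ideals. For $q\in F$ and $I\in\mathcal J(F)$: $\chi_q(I)=1$ if $q\in\max(I)$ and $0$ otherwise; $T_q(I)=1$ if $q\notin I$ and $I\cup\{q\}$ is an ideal (i.e. $q\in\min(F\setminus I)$), $T_q(I)=-1$ if $q\in\max(I)$, and $T_q(I)=0$ otherwise. Convention: any statistic indexed by a nonexistent element (e.g. the valley of a segment with no valley) is identically zero. *)

(* Defs.v *)
From mathcomp Require Import all_boot all_order all_algebra.
Unset Implicit Arguments. Unset Printing Implicit Defensive.
Import GRing.Theory Num.Theory.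

(* Fence  F(alpha), alpha = (alpha_1,...,alpha_t) given as a seq nat
   (alpha_i = nth 0 alpha (i-1)).  The element x_j (1 <= j <= n) is the
   ordinal u : 'I_n with u.+1 = j. *)

Definition apos (alpha : seq nat) (i : nat) : nat := sumn (take i alpha).

Definition fence_n (alpha : seq nat) : nat := apos alpha (size alpha) - 1.

Notation fenceT alpha := ('I_(fence_n alpha)).

(* Direction at position j (1-based): the cover between x_j and x_{j+1}
   goes up iff the (1-based) segment index i with a_{i-1} <= j < a_i is odd;
   here k = i - 1 is 0-based, so i odd <-> k even. *)
Definition dir_up (alpha : seq nat) (j : nat) : bool :=
  [exists k : 'I_(size alpha), (apos alpha k <= j < apos alpha k.+1) && ~~ odd k].

(* covers alpha u w  <->  u is covered by w  (u ⋖ w) *)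
Definition covers (alpha : seq nat) (u w : fenceT alpha) : bool :=
  ((w.+1 == u.+2) && dir_up alpha u.+1) ||
  ((u.+1 == w.+2) && ~~ dir_up alpha w.+1).

Definition fle (alpha : seq nat) (u w : fenceT alpha) : bool :=
  connect (covers alpha) u w.
Definition flt (alpha : seq nat) (u w : fenceT alpha) : bool :=
  (u != w) && fle alpha u w.

Definition finterval (alpha : seq nat) (a b : fenceT alpha) : {set fenceT alpha} :=
  [set w | fle alpha a w && fle alpha w b].

Definition is_ideal (alpha : seq nat) (I : {set fenceT alpha}) : bool :=
  [forall u, forall w, fle alpha u w ==> (w \in I) ==> (u \in I)].

Definition is_max_in (alpha : seq nat) (q : fenceT alpha) (I : {set fenceT alpha}) : bool :=
  (q \in I) && [forall w, flt alpha q w ==> (w \notin I)].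

Definition chi (alpha : seq nat) (q : fenceT alpha) (I : {set fenceT alpha}) : int :=
  (is_max_in alpha q I : nat)%:Z.

Definition Tstat (alpha : seq nat) (q : fenceT alpha) (I : {set fenceT alpha}) : int :=
  if (q \notin I) && is_ideal alpha (q |: I) then 1%R
  else if is_max_in alpha q I then (-1)%R else 0%R.

Definition chiO (alpha : seq nat) (o : option (fenceT alpha)) I : int :=
  if o is Some q then chi alpha q I else 0%R.
Definition TO (alpha : seq nat) (o : option (fenceT alpha)) I : int :=
  if o is Some q then Tstat alpha q I else 0%R.

(* segments S_i (1-based i in [t]):  S_i = { x_j : a_{i-1} <= j <= a_i } ∩ {x_1..x_n};
   for i = 1 the lower bound a_0 = 0 is vacuous and for i = t the upper bound
   a_t = n+1 is vacuous, giving exactly the paper's S_1 and S_t. *)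
Definition seg (alpha : seq nat) (i : nat) : {set fenceT alpha} :=
  [set u : fenceT alpha | apos alpha i.-1 <= u.+1 <= apos alpha i].

Definition shared (alpha : seq nat) : {set fenceT alpha} :=
  [set u : fenceT alpha | [exists k : 'I_(size alpha), (0 < (k : nat)) && (u.+1 == apos alpha k)]].

Definition unshared (alpha : seq nat) (i : nat) : {set fenceT alpha} :=
  seg alpha i :\: shared alpha.

Definition beta (alpha : seq nat) (i : nat) : nat := (nth 0 alpha i.-1).-1.

Definition is_sij (alpha : seq nat) (i j : nat) (u : fenceT alpha) : bool :=
  (u \in unshared alpha i) &&
  (#|[set w in unshared alpha i | flt alpha w u]| == j.-1).

Definition is_peak (alpha : seq nat) (u : fenceT alpha) : bool :=
  #|[set w | covers alpha w u]| == 2.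
Definition is_valley (alpha : seq nat) (u : fenceT alpha) : bool :=
  #|[set w | covers alpha u w]| == 2.

Definition peak_of (alpha : seq nat) (i : nat) : option (fenceT alpha) :=
  [pick u in seg alpha i :&: shared alpha | is_peak alpha u].
Definition valley_of (alpha : seq nat) (i : nat) : option (fenceT alpha) :=
  [pick u in seg alpha i :&: shared alpha | is_valley alpha u].

(* Main.v *)
Require Import Defs.
From mathcomp Require Import all_boot all_order all_algebra.
Import GRing.Theory Num.Theory.
Local Open Scope ring_scope.
From mathcomp Require Import zify.
Set Implicit Arguments. Unset Strict Implicit.

Section Abs.
Variables (T : finType) (cov : rel T).
Local Notation le := (connect cov).
Definition alt (a b : T) := (a != b) && le a b.
Definition aideal (I : {set T}) := [forall u, forall w, le u w ==> (w \in I) ==> (u \in I)].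
Definition amax (q : T) (I : {set T}) := (q \in I) && [forall w, alt q w ==> (w \notin I)].
Definition aT (q : T) (I : {set T}) : int :=
  if (q \notin I) && aideal (q |: I) then 1%R else if amax q I then (-1)%R else 0%R.
Definition achi q I : int := (amax q I : nat)%:Z.

Hypothesis Hirr : forall a, ~~ cov a a.

Lemma amaxP I q : aideal I -> amax q I = (q \in I) && [forall w, cov q w ==> (w \notin I)].
Proof.
move=> HI; rewrite /amax; case: (q \in I) => //=.
apply/idP/idP => /forallP H; apply/forallP => w; apply/implyP => Hw.
- apply: (implyP (H w)); rewrite /alt (connect1 Hw) andbT.
  by apply/eqP => E; move: Hw; rewrite -E (negbTE (Hirr q)).
- case/andP: Hw => Hne /connectP [[|w1 p] /= Hp Hl]; first by rewrite Hl eqxx in Hne.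
  case/andP: Hp => Hq1 Hp.
  have := implyP (H w1) Hq1; apply: contra => Hw.
  have Hle : le w1 w by apply/connectP; exists p.
  by have := implyP (implyP ((forallP ((forallP HI) w1)) w) Hle) Hw.
Qed.

Lemma aidealP I q : aideal I -> q \notin I ->
  aideal (q |: I) = [forall w, cov w q ==> (w \in I)].
Proof.
move=> HI Hq; apply/idP/forallP.
- move=> H w; apply/implyP => Hw.
  have := implyP (implyP ((forallP ((forallP H) w)) q) (connect1 Hw)).
  rewrite !inE eqxx /= => /(_ isT) /orP [/eqP E|//].
  by move: Hw; rewrite E (negbTE (Hirr q)).
- move=> H; apply/forallP => a; apply/forallP => b; apply/implyP => Hab.
  rewrite !inE; apply/implyP; case/orP => [/eqP Eb|Hb]; last first.
    by rewrite (implyP (implyP ((forallP ((forallP HI) a)) b) Hab) Hb) orbT.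
  subst b; case: (eqVneq a q) => [->|Hne]; first by rewrite ?eqxx.
  case/connectP: Hab => p Hp Hl.
  case/lastP: p Hp Hl => [|p w] Hp Hl; first by rewrite /= Hl eqxx in Hne.
  rewrite last_rcons in Hl; subst w.
  rewrite rcons_path in Hp; case/andP: Hp => Hp Hc.
  have Hw := implyP (H _) Hc.
  have Hle : le a (last a p) by apply/connectP; exists p.
  by rewrite (implyP (implyP ((forallP ((forallP HI) a)) _) Hle) Hw) orbT.
Qed.


Lemma sum_iota_pick (G : nat -> int) (c : nat) (b : nat -> bool) a n :
  \sum_(j <- iota a n) (G j * (((j == c) && b j) : nat)%:Z)
    = if b c && (a <= c < a + n)%N then G c else 0.
Proof.
elim: n a => [|n IH] a.
  rewrite big_nil /=; case: ifP => // H; lia.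
rewrite /= big_cons IH.
case: (eqVneq a c) => [->|Hne] /=.
- rewrite ltnn /= andbF addr0 leqnn /= addnS ltnS leq_addr andbT.
  by case: (b c) => /=; rewrite ?mulr1 ?mulr0.
- rewrite mulr0 add0r; case: (b c) => //=; case: ifP => H1; case: ifP => H2 //; lia.
Qed.

Variables (beta : nat) (u : nat -> T) (vo po : option T).
Hypothesis Hb : (0 < beta)%N.
Hypothesis Hle : forall j j', (0 < j <= beta)%N -> (0 < j' <= beta)%N ->
  le (u j) (u j') = (j <= j')%N.
Hypothesis Hint : forall w, le (u 1) w -> le w (u beta) ->
  exists2 j, (0 < j <= beta)%N & w = u j.
Hypothesis Hdn : forall w j, (0 < j <= beta)%N -> cov w (u j) ->
  if j == 1%N then vo = Some w else w = u j.-1.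
Hypothesis Hup : forall w j, (0 < j <= beta)%N -> cov (u j) w ->
  if j == beta then po = Some w else w = u j.+1.
Hypothesis Hv : forall v, vo = Some v -> cov v (u 1) /\ forall w, ~~ cov w v.
Hypothesis Hp : forall p, po = Some p -> cov (u beta) p /\ forall w, ~~ cov p w.

Definition achiO (o : option T) I : int := if o is Some q then achi q I else 0.
Definition aTO (o : option T) I : int := if o is Some q then aT q I else 0.

Lemma u_inj j j' : (0 < j <= beta)%N -> (0 < j' <= beta)%N -> u j = u j' -> j = j'.
Proof.
move=> Hj Hj' E; have h1 := Hle Hj Hj'; have h2 := Hle Hj' Hj.
rewrite E connect0 in h1 h2; apply/eqP; rewrite eqn_leq -h1 -h2 //.
Qed.

Lemma sum_chain (P : pred T) (s : seq nat) (F : T -> int) :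
  (forall j, j \in s -> (0 < j <= beta)%N) -> uniq s ->
  (forall w, P w = (w \in map u s)) ->
  \sum_(w | P w) F w = \sum_(j <- s) F (u j).
Proof.
move=> Hs Hu HP.
have Hum : uniq (map u s).
  rewrite (map_inj_in_uniq _) // => j j' Hj Hj'; exact: u_inj (Hs _ Hj) (Hs _ Hj').
rewrite -big_filter (perm_big (map u s)) ?big_map //.
apply: uniq_perm => //; first by rewrite filter_uniq // index_enum_uniq.
by move=> w; rewrite mem_filter HP mem_index_enum andbT.
Qed.

Lemma card_chain (P : pred T) (s : seq nat) :
  (forall j, j \in s -> (0 < j <= beta)%N) -> uniq s ->
  (forall w, P w = (w \in map u s)) ->
  #|[set w | P w]| = size s.
Proof.
move=> Hs Hu HP.
have Hum : uniq (map u s).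
  rewrite (map_inj_in_uniq _) // => j j' Hj Hj'; exact: u_inj (Hs _ Hj) (Hs _ Hj').
rewrite cardE -(size_map u s); apply: perm_size; apply: uniq_perm => //.
  exact: enum_uniq.
by move=> w; rewrite mem_enum inE HP.
Qed.


Lemma int_mem a b w : (0 < a)%N -> (a <= b)%N -> (b <= beta)%N ->
  (le (u a) w && le w (u b)) = (w \in map u (iota a (b - a).+1)).
Proof.
move=> Ha Hab Hbb; apply/idP/idP.
- case/andP => H1 H2.
  have Ha' : (0 < a <= beta)%N by rewrite Ha (leq_trans Hab).
  have Hb' : (0 < b <= beta)%N by rewrite Hbb (leq_trans Ha).
  have H1' : le (u 1) w.
    apply: connect_trans H1; rewrite Hle //; lia.
  have H2' : le w (u beta).
    apply: connect_trans H2 _; rewrite Hle //; lia.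
  case: (Hint H1' H2') => j Hj E; subst w.
  rewrite Hle // in H1; rewrite Hle // in H2.
  apply: map_f; rewrite mem_iota; lia.
- case/mapP => j; rewrite mem_iota => Hj ->.
  rewrite !Hle //; lia.
Qed.

Lemma up_mem m w : (0 < m <= beta)%N ->
  (alt (u m) w && le w (u beta)) = (w \in map u (iota m.+1 (beta - m))).
Proof.
move=> Hm; apply/idP/idP.
- case/andP => /andP [Hne H1] H2.
  have H1' : le (u 1) w.
    apply: connect_trans H1; rewrite Hle //; lia.
  case: (Hint H1' H2) => j Hj E; subst w.
  rewrite Hle // in H1.
  apply: map_f; rewrite mem_iota; case: (eqVneq m j) Hne => [->|Hmj]; first by rewrite eqxx.
  move=> _; lia.
- case/mapP => j; rewrite mem_iota => Hj ->.
  rewrite /alt !Hle; try lia.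
  have -> : (m <= j)%N by lia.
  have -> : (j <= beta)%N by lia.
  have Hj' : (0 < j <= beta)%N by lia.
  rewrite !andbT; apply/eqP => E; have := u_inj Hm Hj' E; lia.
Qed.

Variable I : {set T}.
Hypothesis HI : aideal I.

Lemma idealP a b : le a b -> b \in I -> a \in I.
Proof. by move=> H1 H2; exact: (implyP (implyP ((forallP ((forallP HI) a)) b) H1) H2). Qed.

Definition kk := find (fun j => u j.+1 \notin I) (iota 0 beta).

Lemma kk_le : (kk <= beta)%N.
Proof. by rewrite /kk -{2}(size_iota 0 beta) find_size. Qed.

Lemma memk j : (0 < j <= beta)%N -> (u j \in I) = (j <= kk)%N.
Proof.
move=> Hj; apply/idP/idP => H.
- rewrite leqNgt; apply/negP => Hk.
  have Hks : (kk < beta)%N by lia.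
  have := @nth_find _ 0%N (fun j => u j.+1 \notin I) (iota 0 beta).
  rewrite -/kk has_find size_iota => /(_ Hks).
  rewrite nth_iota //= add0n => /negP; apply.
  apply: idealP H; rewrite Hle //; lia.
- have : (j.-1 < kk)%N by lia.
  move/(@before_find _ 0%N (fun j => u j.+1 \notin I) (iota 0 beta)).
  rewrite nth_iota; last by have := kk_le; lia.
  rewrite add0n prednK; last by lia.
  by move/negbT; rewrite negbK.
Qed.

Definition ee := if vo is Some v then v \notin I else false.
Definition ff := if po is Some p then p \in I else false.

Lemma ee_k : ee -> kk = 0%N.
Proof.
rewrite /ee; case E: vo => [v|] // Hv'.
apply/eqP; rewrite -leqn0 leqNgt; apply/negP => Hk.
have : u 1 \in I by rewrite memk //; lia.
move/(idealP (connect1 (proj1 (Hv E)))); by rewrite (negbTE Hv').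
Qed.

Lemma ff_k : ff -> kk = beta.
Proof.
rewrite /ff; case E: po => [p|] // Hp'.
have : u beta \in I by apply: (idealP (connect1 (proj1 (Hp E)))).
rewrite memk; last by lia.
have := kk_le; lia.
Qed.

Lemma Hirr' a b : cov a b -> a != b.
Proof. by move=> Hab; apply/eqP => E; move: Hab; rewrite E (negbTE (Hirr b)). Qed.

Lemma amax_u j : (0 < j <= beta)%N ->
  amax (u j) I = (j == kk) && ~~((j == beta) && ff).
Proof.
move=> Hj; case: (ltngtP j kk) => Hjk.
- have Hj1 : (0 < j.+1 <= beta)%N by have := kk_le; lia.
  have Hin : u j.+1 \in I by rewrite memk //.
  rewrite /amax /=; apply/negbTE; rewrite negb_and; apply/orP; right.
  rewrite negb_forall; apply/existsP; exists (u j.+1); rewrite Hin /= implybF negbK.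
  rewrite /alt Hle // leqnSn andbT.
  by apply/eqP => E; have := u_inj Hj Hj1 E; lia.
- by rewrite /amax memk // leqNgt Hjk.
- subst j; rewrite amaxP // memk // leqnn /=.
  case: (eqVneq kk beta) => [Ejb|Hjb] /=.
  + case Hf: ff => /=.
    * move: Hf; rewrite /ff; case E: po => [p|] // Hpi.
      apply/negbTE; rewrite negb_forall; apply/existsP; exists p.
      by rewrite Hpi /= Ejb (proj1 (Hp E)).
    * apply/forallP => w; apply/implyP => Hw.
      have := Hup Hj Hw; rewrite Ejb eqxx => Ep.
      by move: Hf; rewrite /ff Ep => ->.
  + apply/forallP => w; apply/implyP => Hw.
    have := Hup Hj Hw; rewrite (negbTE Hjb) => ->.
    rewrite memk; first lia.
    have := kk_le; lia.
Qed.

Lemma addable_u j : (0 < j <= beta)%N ->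
  (u j \notin I) && aideal (u j |: I) = (j == kk.+1) && ~~((j == 1%N) && ee).
Proof.
move=> Hj; case: (leqP j kk) => Hjk.
  rewrite memk // Hjk /=; apply/esym/negbTE; lia.
have Hn : (u j \notin I) by rewrite memk // -ltnNge.
rewrite Hn /=.
case: (eqVneq j kk.+1) => [Ejk|Hne] /=; last first.
  have Hj1 : (0 < j.-1 <= beta)%N by lia.
  apply/negbTE/negP => /forallP /(_ (u j.-1)) /forallP /(_ (u j)).
  rewrite Hle // leq_pred /= !inE eqxx /= memk //.
  have -> : (j.-1 <= kk)%N = false by apply/negbTE; lia.
  rewrite orbF => /eqP E; have := u_inj Hj1 Hj E; lia.
rewrite (aidealP HI Hn).
case: (eqVneq j 1%N) => [Ej1|Hj1] /=.
- case He: ee => /=.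
  + move: He; rewrite /ee; case E: vo => [v|] // Hvi.
    apply/negbTE; rewrite negb_forall; apply/existsP; exists v.
    by rewrite (negbTE Hvi) implybF negbK ?Ej1 (proj1 (Hv E)).
  + apply/forallP => w; apply/implyP => Hw.
    have := Hdn Hj Hw; rewrite Ej1 eqxx => Ev.
    by move: He; rewrite /ee Ev => /negbT; rewrite negbK.
- apply/forallP => w; apply/implyP => Hw.
  have := Hdn Hj Hw; rewrite (negbTE Hj1) => ->.
  rewrite memk; lia.
Qed.

Lemma Tu j : (0 < j <= beta)%N ->
  aT (u j) I = (((j == kk.+1) && ~~((j == 1%N) && ee)) : nat)%:Z
             - (((j == kk) && ~~((j == beta) && ff)) : nat)%:Z.
Proof.
move=> Hj; rewrite /aT addable_u // amax_u //.
case: (eqVneq j kk.+1) => [E|Hne] /=.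
  by rewrite E (gtn_eqF (ltnSn kk)) /=; case: (_ && _) => //.
by case: (_ && _) => //.
Qed.


Lemma vpart : achiO vo I + aTO vo I = (ee : nat)%:Z.
Proof.
rewrite /achiO /aTO /ee; case E: vo => [v|] //.
have Hnc := proj2 (Hv E).
rewrite /achi /aT; case Hvi: (v \in I) => /=.
- by case: (amax v I).
- rewrite /amax Hvi /= (aidealP HI (negbT Hvi)).
  have -> : [forall w, cov w v ==> (w \in I)].
    by apply/forallP => w; rewrite (negbTE (Hnc w)).
  by [].
Qed.

Lemma ppart : achiO po I = (ff : nat)%:Z.
Proof.
rewrite /achiO /ff; case E: po => [p|] //.
have Hnc := proj2 (Hp E).
rewrite /achi amaxP //; case: (p \in I) => //=.
have -> : [forall w, cov p w ==> (w \notin I)].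
  by apply/forallP => w; rewrite (negbTE (Hnc w)).
by [].
Qed.

Lemma main m : (0 < m <= beta)%N ->
 (beta.+1)%:Z * achi (u m) I + achiO vo I + achiO po I =
 1 - aTO vo I
 - \sum_(w | le (u 1) w && le w (u m))
     (#|[set w' | le (u 1) w' && le w' w]|)%:Z * aT w I
 + \sum_(w | alt (u m) w && le w (u beta))
     (#|[set w' | le w w' && le w' (u beta)]|)%:Z * aT w I.
Proof.
move=> Hm.
rewrite (@sum_chain (fun w => le (u 1) w && le w (u m)) (iota 1 m)); first last.
- by move=> w; rewrite int_mem //; try lia; rewrite subn1 prednK //; lia.
- exact: iota_uniq.
- by move=> j; rewrite mem_iota; lia.
rewrite (@sum_chain (fun w => alt (u m) w && le w (u beta)) (iota m.+1 (beta - m))); first last.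
- by move=> w; rewrite up_mem.
- exact: iota_uniq.
- by move=> j; rewrite mem_iota; lia.
have E1 : \sum_(j <- iota 1 m) (#|[set w' | le (u 1) w' && le w' (u j)]|)%:Z * aT (u j) I
  = \sum_(j <- iota 1 m) ((j%:Z * (((j == kk.+1) && ~~((j == 1%N) && ee)) : nat)%:Z)
                         - (j%:Z * (((j == kk) && ~~((j == beta) && ff)) : nat)%:Z)).
  apply: eq_big_seq => j; rewrite mem_iota => Hj.
  have Hj' : (0 < j <= beta)%N by lia.
  rewrite Tu // mulrBr; congr (_ * _ - _ * _); congr Posz;
    rewrite (@card_chain _ (iota 1 j)) ?size_iota ?iota_uniq //;
    try (by move=> j'; rewrite mem_iota; lia);
    by move=> w; rewrite int_mem //; try lia; rewrite subn1 prednK //; lia.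
have E2 : \sum_(j <- iota m.+1 (beta - m)) (#|[set w' | le (u j) w' && le w' (u beta)]|)%:Z * aT (u j) I
  = \sum_(j <- iota m.+1 (beta - m)) (((beta - j).+1%:Z * (((j == kk.+1) && ~~((j == 1%N) && ee)) : nat)%:Z)
                         - ((beta - j).+1%:Z * (((j == kk) && ~~((j == beta) && ff)) : nat)%:Z)).
  apply: eq_big_seq => j; rewrite mem_iota => Hj.
  have Hj' : (0 < j <= beta)%N by lia.
  rewrite Tu // mulrBr; congr (_ * _ - _ * _); congr Posz;
    rewrite (@card_chain _ (iota j (beta - j).+1)) ?size_iota ?iota_uniq //;
    try (by move=> j'; rewrite mem_iota; lia);
    by move=> w; rewrite int_mem //; lia.
rewrite E1 E2 !sumrB.
rewrite (@sum_iota_pick (fun j => j%:Z)) (@sum_iota_pick (fun j => j%:Z)).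
rewrite (@sum_iota_pick (fun j => (beta - j).+1%:Z)) (@sum_iota_pick (fun j => (beta - j).+1%:Z)).
have V := vpart; have P := ppart.
rewrite /achi amax_u //.
have Hek := ee_k; have Hfk := ff_k; have Hkb := kk_le.
move: V P Hek Hfk Hkb; set e := ee; set f := ff; set k := kk.
move=> V P Hek Hfk Hkb.
have -> : achiO vo I = (e : nat)%:Z - aTO vo I by rewrite -V addrK.
rewrite P; move: (aTO vo I) => t.
case: e Hek V => Hek V; [have Hk0 := Hek isT | clear Hek];
case: f Hfk P => Hfk P; [have Hk1 := Hfk isT | clear Hfk | have Hk1 := Hfk isT | clear Hfk];
  rewrite /= ?andbF ?andbT;
  case: (m == k) / eqP => ?; case: (m == beta) / eqP => ?; case: (k == beta) / eqP => ?;
  case: (k.+1 == 1%N) / eqP => ?;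
  rewrite /= ?andbF ?andbT ?andbF ?mulr0 ?mulr1;
  repeat case: ifP; move=> *; try lia.
Qed.

End Abs.

Local Close Scope ring_scope.
Section Fence.
Variable alpha : seq nat.
Hypothesis Hpos : all (fun a => 0 < a)%N alpha.
Hypothesis H1 : (2 <= head 0 alpha)%N.
Hypothesis Htl : (2 <= last 0 alpha)%N.
Local Notation t := (size alpha).
Local Notation N := (fence_n alpha).
Local Notation up j := (dir_up alpha j.+1).

Lemma aposS l : apos alpha l.+1 = apos alpha l + nth 0 alpha l.
Proof.
rewrite /apos; case: (ltnP l (size alpha)) => Hl.
  by rewrite (take_nth 0 Hl) sumn_rcons.
rewrite nth_default // addn0 (take_oversize Hl) take_oversize //; exact: leqW.
Qed.

Lemma apos0 : apos alpha 0 = 0.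
Proof. by rewrite /apos take0. Qed.

Lemma nth_pos l : l < t -> 0 < nth 0 alpha l.
Proof. by move=> Hl; apply: (all_nthP 0 Hpos). Qed.

Lemma apos_mono k l : k <= l -> apos alpha k <= apos alpha l.
Proof.
elim: l => [|l IH] Hkl; first by move: Hkl; rewrite leqn0 => /eqP ->.
rewrite leq_eqVlt in Hkl; case/orP: Hkl => [/eqP->//|Hkl].
by rewrite aposS; apply: leq_trans (IH Hkl) (leq_addr _ _).
Qed.

Lemma apos_lt k l : k < l -> l <= t -> apos alpha k < apos alpha l.
Proof.
case: l => [//|l] Hkl Hl; rewrite aposS.
have := @apos_mono k l (ltac:(lia)); have := nth_pos Hl; lia.
Qed.

Lemma apos1 : apos alpha 1 = head 0 alpha.
Proof. by rewrite aposS apos0 add0n nth0. Qed.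

Lemma apos_ge2 k : 0 < k -> 2 <= apos alpha k.
Proof. by move=> Hk; have := apos_mono Hk; rewrite apos1; lia. Qed.

Lemma Ht0 : 0 < t.
Proof. by case: alpha H1. Qed.

Lemma apos_t : apos alpha t = N.+1.
Proof. rewrite /fence_n; have := apos_ge2 Ht0; lia. Qed.

Lemma apos_last : apos alpha t.-1 + 2 <= apos alpha t.
Proof.
have := aposS t.-1; rewrite prednK; last exact: Ht0.
move=> ->; rewrite nth_last; lia.
Qed.

Lemma dirE i j : 0 < i <= t -> apos alpha i.-1 <= j < apos alpha i ->
  dir_up alpha j = ~~ odd i.-1.
Proof.
move=> Hi Hj; apply/existsP/idP.
- case=> k /andP [/andP [Hk1 Hk2] Ho].
  have Hk : (k : nat) = i.-1.
    case: (ltngtP k i.-1) => Hk //.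
    + have := @apos_mono k.+1 i.-1 Hk; lia.
    + have := @apos_mono i k (ltac:(lia)); lia.
  by rewrite -Hk.
- move=> Ho; have Hi' : i.-1 < t by lia.
  exists (Ordinal Hi'); rewrite /= Ho andbT prednK; last by lia.
  by rewrite Hj.
Qed.

Lemma covers_val (a b : 'I_N) :
  covers alpha a b = (((b:nat) == (a:nat).+1) && up a) || (((a:nat) == (b:nat).+1) && ~~ up b).
Proof. by rewrite /covers !eqSS. Qed.

Definition Rp (a b : nat) := (a <= b /\ forall s, a <= s < b -> up s) \/
                             (b <= a /\ forall s, b <= s < a -> ~~ up s).

Lemma stepR (a c : 'I_N) (w : nat) : covers alpha a c -> Rp c w -> Rp a w.
Proof.
rewrite covers_val; case/orP => /andP [/eqP Ec Hu].
- case=> [[Hw1 Hw2]|[Hw1 Hw2]].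
  + left; split; first lia.
    move=> s Hs; case: (eqVneq s a) => [->//|Hne]; apply: Hw2; lia.
  + case: (eqVneq w (c:nat)) => Hwc.
    * left; split; first lia.
      move=> s Hs; have -> : s = a by lia. exact: Hu.
    * have := Hw2 a; rewrite Hu; move=> H; exfalso; have := H (ltac:(lia)); done.
- case=> [[Hw1 Hw2]|[Hw1 Hw2]].
  + case: (eqVneq w (c:nat)) => Hwc.
    * right; split; first lia.
      move=> s Hs; have -> : s = c by lia. exact: Hu.
    * have := Hw2 c; rewrite (negbTE Hu); move=> H; exfalso; have := H (ltac:(lia)); done.
  + right; split; first lia.
    move=> s Hs; case: (eqVneq s c) => [->//|Hne]; apply: Hw2; lia.
Qed.

Lemma conn_up d : forall (a b : 'I_N), (b:nat) = a + d ->
  (forall s, a <= s < b -> up s) -> fle alpha a b.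
Proof.
elim: d => [|d IH] a b Hab Hs.
  have E : a = b by apply: val_inj => /=; lia.
  by rewrite E; exact: connect0.
have Ha1 : a.+1 < N by have := ltn_ord b; lia.
rewrite /fle; apply: (@connect_trans _ _ (Ordinal Ha1)).
  apply: connect1; rewrite covers_val /= eqxx Hs //=; lia.
apply: IH => /=; first lia.
move=> s Hs'; apply: Hs; lia.
Qed.

Lemma conn_dn d : forall (a b : 'I_N), (a:nat) = b + d ->
  (forall s, b <= s < a -> ~~ up s) -> fle alpha a b.
Proof.
elim: d => [|d IH] a b Hab Hs.
  have E : a = b by apply: val_inj => /=; lia.
  by rewrite E; exact: connect0.
have Hb1 : b.+1 < N by have := ltn_ord a; lia.
rewrite /fle; apply: (@connect_trans _ _ (Ordinal Hb1)).
  apply: IH => /=; first lia.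
  move=> s Hs'; apply: Hs; lia.
apply: connect1; rewrite covers_val /= eqxx Hs ?orbT //=; lia.
Qed.

Lemma fleP (a b : 'I_N) : fle alpha a b <-> Rp a b.
Proof.
split.
- case/connectP => p Hp ->.
  elim: p a Hp => [|c p IH] a /=.
    by move=> _; left; split => // s; lia.
  case/andP => Hac Hp; exact: stepR Hac (IH c Hp).
- case=> [[H1' H2']|[H1' H2']].
  + by apply: (@conn_up (b - a)) => //; lia.
  + by apply: (@conn_dn (a - b)) => //; lia.
Qed.


Lemma pick_unique (P : pred 'I_N) w : (forall q, P q = (q == w)) -> [pick q | P q] = Some w.
Proof.
move=> HP; case: pickP => [q Hq|H]; first by rewrite HP in Hq; move/eqP: Hq => ->.
by have := H w; rewrite HP eqxx.
Qed.

Lemma shared_intro (q : 'I_N) k : 0 < k < t -> (q:nat).+1 = apos alpha k -> q \in shared alpha.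
Proof.
move=> Hk E; rewrite inE; apply/existsP; have Hk' : k < t by lia.
by exists (Ordinal Hk'); rewrite /= E eqxx andbT; lia.
Qed.

Lemma is_valleyE (q : 'I_N) : is_valley alpha q -> 0 < q /\ up q /\ ~~ up (q:nat).-1.
Proof.
rewrite /is_valley => /eqP Hc.
have : 1 < #|[set w | covers alpha q w]| by rewrite Hc.
case/card_gt1P => a [b [Ha Hb Hab]].
rewrite !inE !covers_val in Ha Hb.
have Hab' : (a:nat) != b by [].
case/orP: Ha => /andP [/eqP Ea Ua]; case/orP: Hb => /andP [/eqP Eb Ub].
- by move: Hab'; rewrite Ea Eb eqxx.
- split; first lia. split => //. by have -> : (q:nat).-1 = b by lia.
- split; first lia. split => //. by have -> : (q:nat).-1 = a by lia.
- exfalso; move: Hab'; have -> : (a:nat) = b by lia. by rewrite eqxx.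
Qed.

Lemma is_peakE (q : 'I_N) : is_peak alpha q -> 0 < q /\ ~~ up q /\ up (q:nat).-1.
Proof.
rewrite /is_peak => /eqP Hc.
have : 1 < #|[set w | covers alpha w q]| by rewrite Hc.
case/card_gt1P => a [b [Ha Hb Hab]].
rewrite !inE !covers_val in Ha Hb.
have Hab' : (a:nat) != b by [].
case/orP: Ha => /andP [/eqP Ea Ua]; case/orP: Hb => /andP [/eqP Eb Ub].
- exfalso; move: Hab'; have -> : (a:nat) = b by lia. by rewrite eqxx.
- split; first lia. split => //. by have -> : (q:nat).-1 = a by lia.
- split; first lia. split => //. by have -> : (q:nat).-1 = b by lia.
- by move: Hab'; rewrite Ea Eb eqxx.
Qed.

Lemma valley_intro (q : 'I_N) : 0 < q -> (q:nat).+1 < N -> up q -> ~~ up (q:nat).-1 ->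
  is_valley alpha q.
Proof.
move=> Hq0 HqN Hu Hd.
have Hq1 : (q:nat).-1 < N by lia.
rewrite /is_valley (_ : [set w | covers alpha q w] = [set Ordinal HqN; Ordinal Hq1]).
  have Hne : ((q:nat).+1 == (q:nat).-1) = false by apply/eqP; lia.
  by rewrite cards2 -val_eqE /= Hne.
apply/setP => w; rewrite !inE covers_val -!val_eqE /= Hu andbT.
apply/idP/idP.
- case/orP => [->//|/andP [/eqP E _]]; apply/orP; right; apply/eqP; lia.
- case/orP => [->//|/eqP E]; apply/orP; right.
  have -> : (w:nat) = (q:nat).-1 by lia.
  rewrite Hd andbT; apply/eqP; lia.
Qed.

Lemma peak_intro (q : 'I_N) : 0 < q -> (q:nat).+1 < N -> ~~ up q -> up (q:nat).-1 ->
  is_peak alpha q.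
Proof.
move=> Hq0 HqN Hu Hd.
have Hq1 : (q:nat).-1 < N by lia.
rewrite /is_peak (_ : [set w | covers alpha w q] = [set Ordinal HqN; Ordinal Hq1]).
  have Hne : ((q:nat).+1 == (q:nat).-1) = false by apply/eqP; lia.
  by rewrite cards2 -val_eqE /= Hne.
apply/setP => w; rewrite !inE covers_val -!val_eqE /= Hu andbT.
apply/idP/idP.
- case/orP => [/andP [/eqP E _]|->]; last by [].
  apply/orP; right; apply/eqP; lia.
- case/orP => [/eqP E|/eqP E]; apply/orP; [right|left]; last first.
    have -> : (w:nat) = (q:nat).-1 by lia.
    rewrite Hd andbT; apply/eqP; lia.
  by apply/eqP.
Qed.

Section Chain.
Variable i : nat.
Hypothesis Hi : 0 < i <= t.
Hypothesis Hai : 2 <= nth 0 alpha i.-1.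
Variable x0 : 'I_N.
Local Notation A := (apos alpha i.-1).
Local Notation bt := (nth 0 alpha i.-1).-1.
Local Notation d := (~~ odd i.-1).

Lemma aposi : apos alpha i = A + bt + 1.
Proof. by have := aposS i.-1; rewrite prednK; [move=> ->; lia | lia]. Qed.

Lemma AbN : A + bt <= N.
Proof. have := @apos_mono i t (ltac:(lia)); rewrite apos_t aposi; lia. Qed.

Lemma upseg s : A <= s.+1 < A + bt + 1 -> up s = d.
Proof. by move=> Hs; apply: dirE => //; rewrite aposi. Qed.

Lemma dir_prev : 1 < i -> up (A - 2) = ~~ d.
Proof.
move=> Hi1; have HA := @apos_lt i.-2 i.-1 (ltac:(lia)) (ltac:(lia)).
have HA2 := @apos_ge2 i.-1 (ltac:(lia)).
rewrite (@dirE i.-1) ?negbK; first last.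
- lia.
- lia.
have -> : i.-1 = (i.-2).+1 by lia.
by [] || (rewrite /=; done).
Qed.

Lemma dir_next : i < t -> up (A + bt) = ~~ d.
Proof.
move=> Hit; have HA := @apos_lt i i.+1 (ltnSn _) Hit.
rewrite (@dirE i.+1) /=; first last.
- rewrite aposi in HA *; lia.
- lia.
have -> : i = (i.-1).+1 by lia.
by [] || (rewrite /=; done) || (rewrite /= negbK; done).
Qed.

Lemma i_lt_t (q : 'I_N) : (q:nat) = A + bt -> i < t.
Proof.
move=> Hq; case: (ltngtP i t) => // Hit; try lia.
have := ltn_ord q; have := apos_t; rewrite -Hit aposi; lia.
Qed.

Lemma AbN2 : i < t -> A + bt + 2 <= N.
Proof.
move=> Hit; have := @apos_mono i t.-1 (ltac:(lia)); have := apos_last.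
rewrite apos_t aposi; lia.
Qed.

Lemma A_ge2 : 1 < i -> 2 <= A.
Proof. by move=> H; apply: apos_ge2; lia. Qed.

Lemma i_gt1 : 0 < A -> 1 < i.
Proof. case: (ltngtP i 1) => // Hi1; try lia. by rewrite Hi1 /= apos0. Qed.

Lemma segshared (q : 'I_N) : q \in seg alpha i :&: shared alpha ->
  (q:nat).+1 = A \/ (q:nat) = A + bt.
Proof.
rewrite !inE => /andP [/andP [Ha Hb] /existsP [k /andP [Hk /eqP E]]].
rewrite aposi in Hb.
case: (ltngtP (q:nat).+1 A) => HA; try lia.
case: (ltngtP (q:nat) (A + bt)) => HB; try lia.
exfalso; case: (leqP k i.-1) => Hk'.
  have := apos_mono Hk'; lia.
have := @apos_mono i k (ltac:(lia)); rewrite aposi; lia.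
Qed.

Definition cidx j := if d then (A + j).-1 else A + bt - j.
Definition uu j : 'I_N := insubd x0 (cidx j).

Lemma val_uu j : 0 < j <= bt -> (uu j : nat) = cidx j.
Proof.
move=> Hj; rewrite /uu val_insubd; have := AbN; rewrite /cidx.
by case: (odd i.-1) => /= HAb; rewrite ifT //; lia.
Qed.

Lemma unsharedE (w : 'I_N) : (w \in unshared alpha i) = (A <= w < A + bt).
Proof.
rewrite /unshared /seg /shared !inE; apply/idP/idP.
- case/andP => Hns /andP [Ha Hb]; rewrite aposi in Hb.
  have HA : A < (w:nat).+1.
    case: (ltngtP A (w:nat).+1) => // E; first lia.
    case E0: (i.-1) => [|k]; first by move: E; rewrite E0 apos0.
    move/negP: Hns; case; apply/existsP.
    have Hk : k.+1 < t by lia.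
    by exists (Ordinal Hk); rewrite /= -E0 E eqxx.
  have HB : (w:nat).+1 < A + bt + 1.
    case: (ltngtP (w:nat).+1 (A + bt + 1)) => // E; try lia.
    case: (ltngtP i t) => Hit; try lia.
      move/negP: Hns; case; apply/existsP.
      by exists (Ordinal Hit); rewrite /= aposi E eqxx; lia.
    have := ltn_ord w; have := apos_t; rewrite -Hit aposi; lia.
  lia.
- move=> H; apply/andP; split; last by rewrite aposi; lia.
  apply/negP => /existsP [k /andP [Hk /eqP E]].
  case: (leqP k i.-1) => Hk'.
    have := apos_mono Hk'; lia.
  have := @apos_mono i k (ltac:(lia)); rewrite aposi; lia.
Qed.

Lemma unshared_uu w : w \in unshared alpha i -> exists2 j, 0 < j <= bt & w = uu j.
Proof.
rewrite unsharedE => Hw.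
exists (if d then (w:nat) - A + 1 else A + bt - w); first by case: d; lia.
apply: val_inj => /=; rewrite val_uu; last by case: d; lia.
by rewrite /cidx; case: d; lia.
Qed.

Lemma uu_unshared j : 0 < j <= bt -> uu j \in unshared alpha i.
Proof. by move=> Hj; rewrite unsharedE val_uu // /cidx; case: d; lia. Qed.


Lemma Hle_c j j' : 0 < j <= bt -> 0 < j' <= bt ->
  fle alpha (uu j) (uu j') = (j <= j').
Proof.
move=> Hj Hj'; apply/idP/idP.
- move/fleP; rewrite /Rp !val_uu // /cidx.
  case Hd: d; case=> [[Ha Hb]|[Ha Hb]]; try lia.
  + case: (leqP j j') => // Hlt.
    have := Hb (A + j').-1 (ltac:(lia)); rewrite upseg ?Hd //; lia.
  + case: (leqP j j') => // Hlt.
    have := Hb (A + bt - j) (ltac:(lia)); rewrite upseg ?Hd //; lia.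
- move=> Hjj; apply/fleP; rewrite /Rp !val_uu // /cidx.
  case Hd: d; [left | right]; (split; first lia);
    move=> s Hs; rewrite upseg ?Hd //; lia.
Qed.

Lemma Hint_c w : fle alpha (uu 1) w -> fle alpha w (uu bt) ->
  exists2 j, 0 < j <= bt & w = uu j.
Proof.
have Hb1 : 0 < 1 <= bt by lia.
have Hbb : 0 < bt <= bt by lia.
move=> /fleP H1' /fleP H2'; apply: unshared_uu; rewrite unsharedE.
move: H1' H2'; rewrite /Rp !val_uu // /cidx.
case Hd: d => H1' H2'.
- have L : A <= w.
    case: H1' => [[Ha _]|[Ha Hb]]; first lia.
    rewrite leqNgt; apply/negP => Hlt.
    have := Hb (A.-1) (ltac:(lia)); rewrite upseg ?Hd //; lia.
  have U : w < A + bt.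
    case: H2' => [[Ha _]|[Ha Hb]]; first lia.
    rewrite ltnNge; apply/negP => Hlt.
    have := Hb (A + bt).-1 (ltac:(lia)); rewrite upseg ?Hd //; lia.
  by rewrite L U.
- have L : A <= w.
    case: H2' => [[Ha Hb]|[Ha _]]; last lia.
    rewrite leqNgt; apply/negP => Hlt.
    have := Hb (A.-1) (ltac:(lia)); rewrite upseg ?Hd //; lia.
  have U : w < A + bt.
    case: H1' => [[Ha Hb]|[Ha _]]; last lia.
    rewrite ltnNge; apply/negP => Hlt.
    have := Hb (A + bt - 1) (ltac:(lia)); rewrite upseg ?Hd //; lia.
  by rewrite L U.
Qed.

Lemma cov_dn_c (w : 'I_N) j : 0 < j <= bt -> covers alpha w (uu j) ->
  if j == 1 then (if d then (w:nat).+1 = A else (w:nat) = A + bt) else w = uu j.-1.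
Proof.
move=> Hj; rewrite covers_val val_uu // /cidx.
have Hj1 : 1 < j -> 0 < j.-1 <= bt by lia.
case Hd: d; case/orP => /andP [/eqP E Hu].
- case: (eqVneq j 1) => [Ej|Hne] /=; first lia.
  apply: val_inj => /=; rewrite val_uu; last by apply: Hj1; lia.
  by rewrite /cidx Hd; lia.
- by move: Hu; rewrite upseg ?Hd //; lia.
- by move: Hu; rewrite upseg ?Hd //; lia.
- case: (eqVneq j 1) => [Ej|Hne] /=; first lia.
  apply: val_inj => /=; rewrite val_uu; last by apply: Hj1; lia.
  by rewrite /cidx Hd; lia.
Qed.

Lemma cov_up_c (w : 'I_N) j : 0 < j <= bt -> covers alpha (uu j) w ->
  if j == bt then (if d then (w:nat) = A + bt else (w:nat).+1 = A) else w = uu j.+1.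
Proof.
move=> Hj; rewrite covers_val val_uu // /cidx.
have Hj1 : j < bt -> 0 < j.+1 <= bt by lia.
case Hd: d; case/orP => /andP [/eqP E Hu].
- case: (eqVneq j bt) => [Ej|Hne] /=; first lia.
  apply: val_inj => /=; rewrite val_uu; last by apply: Hj1; lia.
  by rewrite /cidx Hd; lia.
- by move: Hu; rewrite upseg ?Hd //; lia.
- by move: Hu; rewrite upseg ?Hd //; lia.
- case: (eqVneq j bt) => [Ej|Hne] /=; first lia.
  apply: val_inj => /=; rewrite val_uu; last by apply: Hj1; lia.
  by rewrite /cidx Hd; lia.
Qed.


Lemma seg_intro (q : 'I_N) : A <= (q:nat).+1 <= A + bt + 1 -> q \in seg alpha i.
Proof. by rewrite inE aposi. Qed.

Lemma valley_some (w : 'I_N) : (if d then (w:nat).+1 = A else (w:nat) = A + bt) ->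
  valley_of alpha i = Some w.
Proof.
move=> Hw; rewrite /valley_of; apply: pick_unique => q; apply/idP/idP.
- case/andP => Hq Hv; have [Hq0 [Hu Hd']] := is_valleyE Hv.
  apply/eqP/val_inj => /=.
  case: (segshared Hq) => Eq; move: Hw; case Hd: d => Hw; try lia.
  + move: Hu; rewrite upseg ?Hd; [by move=> /negP | lia].
  + move: Hd'; rewrite upseg ?Hd; [by move=> /negP | lia].
- move/eqP => ->; move: Hw; case Hd: d => Hw.
  + have Hi1 : 1 < i by apply: i_gt1; lia.
    have HA2 := A_ge2 Hi1.
    have := AbN.
    move=> HAb; rewrite inE; apply/andP; split; [apply/andP; split|].
    * by apply: seg_intro; lia.
    * by apply: (@shared_intro _ i.-1) => //; lia.
    * apply: valley_intro; try lia.
      - by rewrite upseg ?Hd //; lia.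
      - have -> : (w:nat).-1 = A - 2 by lia. by rewrite dir_prev // Hd.
  + have Hit := i_lt_t Hw.
    have := AbN2 Hit => HAb.
    rewrite inE; apply/andP; split; [apply/andP; split|].
    * by apply: seg_intro; lia.
    * by apply: (@shared_intro _ i) => //; [lia | rewrite aposi; lia].
    * apply: valley_intro; try lia.
      - by rewrite Hw dir_next // Hd.
      - by rewrite upseg ?Hd //; lia.
Qed.

Lemma peak_some (w : 'I_N) : (if d then (w:nat) = A + bt else (w:nat).+1 = A) ->
  peak_of alpha i = Some w.
Proof.
move=> Hw; rewrite /peak_of; apply: pick_unique => q; apply/idP/idP.
- case/andP => Hq Hv; have [Hq0 [Hu Hd']] := is_peakE Hv.
  apply/eqP/val_inj => /=.
  case: (segshared Hq) => Eq; move: Hw; case Hd: d => Hw; try lia.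
  + move: Hu; rewrite upseg ?Hd; [by move=> /negP | lia].
  + move: Hu; have Hit := i_lt_t Eq; rewrite Eq dir_next // Hd /=; by move=> /negP.
- move/eqP => ->; move: Hw; case Hd: d => Hw.
  + have Hit := i_lt_t Hw.
    have := AbN2 Hit => HAb.
    rewrite inE; apply/andP; split; [apply/andP; split|].
    * by apply: seg_intro; lia.
    * by apply: (@shared_intro _ i) => //; [lia | rewrite aposi; lia].
    * apply: peak_intro; try lia.
      - by rewrite Hw dir_next // Hd.
      - by rewrite upseg ?Hd //; lia.
  + have Hi1 : 1 < i by apply: i_gt1; lia.
    have HA2 := A_ge2 Hi1.
    have := AbN.
    move=> HAb; rewrite inE; apply/andP; split; [apply/andP; split|].
    * by apply: seg_intro; lia.
    * by apply: (@shared_intro _ i.-1) => //; lia.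
    * apply: peak_intro; try lia.
      - by rewrite upseg ?Hd //; lia.
      - have -> : (w:nat).-1 = A - 2 by lia. by rewrite dir_prev // Hd.
Qed.


Lemma Hv_c v : valley_of alpha i = Some v ->
  covers alpha v (uu 1) /\ forall w, ~~ covers alpha w v.
Proof.
rewrite /valley_of; case: pickP => // q /andP [Hq Hv] [<-].
have [Hq0 [Hu Hd']] := is_valleyE Hv.
split.
- rewrite covers_val val_uu /cidx; last lia.
  case Hd: d; case: (segshared Hq) => Eq.
  + apply/orP; left; rewrite Hu andbT; apply/eqP; lia.
  + exfalso; have E : up ((q:nat).-1) = true by rewrite upseg ?Hd //; lia.
    by rewrite E in Hd'.
  + exfalso; have E : up q = false by rewrite upseg ?Hd //; lia.
    by rewrite E in Hu.
  + apply/orP; right; rewrite upseg ?Hd; last lia.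
    rewrite andbT; apply/eqP; lia.
- move=> w; rewrite covers_val; apply/negP; case/orP => /andP [/eqP E Hw].
  + have E' : (w:nat) = (q:nat).-1 by lia.
    by rewrite E' (negbTE Hd') in Hw.
  + by rewrite Hu in Hw.
Qed.

Lemma Hp_c p : peak_of alpha i = Some p ->
  covers alpha (uu bt) p /\ forall w, ~~ covers alpha p w.
Proof.
rewrite /peak_of; case: pickP => // q /andP [Hq Hv] [<-].
have [Hq0 [Hu Hd']] := is_peakE Hv.
split.
- rewrite covers_val val_uu /cidx; last lia.
  case Hd: d; case: (segshared Hq) => Eq.
  + exfalso; have E : up q = true by rewrite upseg ?Hd //; lia.
    by rewrite E in Hu.
  + apply/orP; left; rewrite upseg ?Hd; last lia.
    rewrite andbT; apply/eqP; lia.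
  + apply/orP; right; rewrite Hu andbT; apply/eqP; lia.
  + exfalso; have Hit := i_lt_t Eq.
    have E : up q = true by rewrite Eq dir_next // Hd.
    by rewrite E in Hu.
- move=> w; rewrite covers_val; apply/negP; case/orP => /andP [/eqP E Hw].
  + by rewrite (negbTE Hu) in Hw.
  + have E' : (w:nat) = (q:nat).-1 by lia.
    by rewrite E' Hd' in Hw.
Qed.


Lemma Hirr_c a : ~~ covers alpha a a.
Proof. by rewrite covers_val; apply/negP; case/orP => /andP [/eqP E _]; lia. Qed.

Lemma flt_uu j j' : 0 < j <= bt -> 0 < j' <= bt -> flt alpha (uu j) (uu j') = (j < j').
Proof.
move=> Hj Hj'; rewrite /flt Hle_c //.
case: (eqVneq (uu j) (uu j')) => [E|Hne] /=.
  have := Hle_c Hj Hj'; have := Hle_c Hj' Hj; rewrite E /fle connect0; lia.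
have : j != j' by apply: contraNneq Hne => ->.
lia.
Qed.

Local Open Scope ring_scope.
Lemma main_conc (x y z : 'I_N)
  (Hx : x \in unshared alpha i)
  (Hy : is_sij alpha i 1 y)
  (Hz : is_sij alpha i (beta alpha i) z)
  (I : {set 'I_N}) (HI : is_ideal alpha I) :
  (nth 0%N alpha i.-1)%:Z * chi alpha x I
    + chiO alpha (valley_of alpha i) I + chiO alpha (peak_of alpha i) I
  = 1 - TO alpha (valley_of alpha i) I
      - \sum_(u | fle alpha y u && fle alpha u x)
          (#|finterval alpha y u|)%:Z * Tstat alpha u I
      + \sum_(u | flt alpha x u && fle alpha u z)
          (#|finterval alpha u z|)%:Z * Tstat alpha u I.
Proof.
have Hb : (0 < bt)%N by lia.
have Hb1 : (0 < 1 <= bt)%N by lia.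
have Hdn : forall (w : 'I_N) j, (0 < j <= bt)%N -> covers alpha w (uu j) ->
    if j == 1%N then valley_of alpha i = Some w else w = uu j.-1.
  move=> w j Hj Hc; have := cov_dn_c Hj Hc; case: (j == 1%N) => // H.
  exact: valley_some H.
have Hup : forall (w : 'I_N) j, (0 < j <= bt)%N -> covers alpha (uu j) w ->
    if j == bt then peak_of alpha i = Some w else w = uu j.+1.
  move=> w j Hj Hc; have := cov_up_c Hj Hc; case: (j == bt) => // H.
  exact: peak_some H.
case: (unshared_uu Hx) => m Hm ->.
move: Hy => /andP [/unshared_uu [j1 Hj1 ->] Hc1].
have Ej1 : j1 = 1%N.
  case: (eqVneq j1 1%N) => // Hne; exfalso.
  move/eqP/cards0_eq: Hc1 => E.
  have := in_set0 (uu 1); rewrite -E inE uu_unshared // flt_uu //; lia.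
subst j1.
move: Hz => /andP [/unshared_uu [j2 Hj2 ->] Hc2].
have Ej2 : j2 = bt.
  have Hcard := @card_chain _ _ _ uu Hle_c
     (fun w => (w \in unshared alpha i) && flt alpha w (uu j2)) (iota 1 j2.-1).
  have P1 : forall j, j \in iota 1 j2.-1 -> (0 < j <= bt)%N.
    by move=> j; rewrite mem_iota; lia.
  have P2 : forall w, ((w \in unshared alpha i) && flt alpha w (uu j2)) =
                      (w \in map uu (iota 1 j2.-1)).
    move=> w; apply/idP/idP.
    + case/andP => /unshared_uu [j Hj ->]; rewrite flt_uu // => Hjj.
      by apply: map_f; rewrite mem_iota; lia.
    + case/mapP => j; rewrite mem_iota => Hj ->.
      by rewrite uu_unshared ?flt_uu //; lia.
  have := Hcard P1 (iota_uniq _ _) P2; rewrite size_iota => E.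
  move: Hc2; rewrite E /beta; lia.
subst j2.
have -> : (nth 0%N alpha i.-1) = bt.+1 by lia.
exact: (@main _ _ Hirr_c bt uu (valley_of alpha i) (peak_of alpha i) Hb Hle_c Hint_c
   Hdn Hup Hv_c Hp_c I HI m Hm).
Qed.

End Chain.
End Fence.

Local Open Scope ring_scope.
Unset Implicit Arguments.

Theorem theorem3p1 (alpha : seq nat)
  (Hpos : all (fun a => 0 < a)%N alpha)
  (Ht : (2 <= size alpha)%N)
  (H1 : (2 <= head 0 alpha)%N) (Htl : (2 <= last 0 alpha)%N)
  (i : nat) (Hi : (1 <= i <= size alpha)%N) (Hai : (2 <= nth 0 alpha i.-1)%N)
  (x y z : fenceT alpha)
  (Hx : x \in unshared alpha i)
  (Hy : is_sij alpha i 1 y)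
  (Hz : is_sij alpha i (beta alpha i) z)
  (I : {set fenceT alpha}) (HI : is_ideal alpha I) :
  (nth 0%N alpha i.-1)%:Z * chi alpha x I
    + chiO alpha (valley_of alpha i) I + chiO alpha (peak_of alpha i) I
  = 1 - TO alpha (valley_of alpha i) I
      - \sum_(u | fle alpha y u && fle alpha u x)
          (#|finterval alpha y u|)%:Z * Tstat alpha u I
      + \sum_(u | flt alpha x u && fle alpha u z)
          (#|finterval alpha u z|)%:Z * Tstat alpha u I.
Proof.
exact: (main_conc Hpos H1 Htl Hi Hai x Hx Hy Hz HI).
Qed.
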